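(* Let $T>0$, $0<M\le2$, $N=2$, and consider the problem of minimizing $\mathbb V(T)=\frac12(\xi_1(T)^2+\xi_2(T)^2)$ over $\alpha\in\mathcal U_M$, where $\dot\xi_i=-\xi_i+(1-\alpha_i)\bar\xi$ ($i=1,2$), $\bar\xi=\frac12(\xi_1+\xi_2)$, with initial datum satisfying $\bar\xi(0)>0$. If $\xi_1(0)=\xi_2(0)$, then a control $\alpha\in\mathcal U_M$ is optimal if and only if $\alpha_1+\alpha_2\equiv M$ and $\xi_1(T)=\xi_2(T)$.
   Context: $\mathcal U_M$ is the set of measurable $\alpha:[0,T]\to[0,1]^2$ with $\alpha_1(t)+\alpha_2(t)\le M$ for all $t$; ''$\equiv$'' means equality for (almost) all $t\in[0,T]$. *)

(* Defs.v *)
From HB Require Import structures.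
From mathcomp Require Import all_boot all_order all_algebra.
From mathcomp Require Import all_classical all_reals all_analysis.
Set Implicit Arguments. Unset Strict Implicit. Unset Printing Implicit Defensive.
Import Order.TTheory GRing.Theory Num.Theory.
Import numFieldNormedType.Exports.
Local Open Scope classical_set_scope.
Local Open Scope ring_scope.

Definition admissible (R : realType) (T M : R) (a1 a2 : R -> R) : Prop :=
  measurable_fun `[0, T]%classic a1 /\ measurable_fun `[0, T]%classic a2 /\
  (forall t, 0 <= t <= T ->
     [/\ 0 <= a1 t <= 1, 0 <= a2 t <= 1 & a1 t + a2 t <= M]).

Definition xibar (R : realType) (x1 x2 : R -> R) (t : R) : R :=
  (x1 t + x2 t) / 2.

Definition trajectory (R : realType) (T : R) (a1 a2 x1 x2 : R -> R)
    (c1 c2 : R) : Prop :=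
  {within `[0, T], continuous x1} /\ {within `[0, T], continuous x2} /\
  (forall t, 0 <= t <= T ->
     x1 t = c1 + Rintegral lebesgue_measure `[0, t]%classic
                  (fun s => - x1 s + (1 - a1 s) * xibar x1 x2 s)) /\
  (forall t, 0 <= t <= T ->
     x2 t = c2 + Rintegral lebesgue_measure `[0, t]%classic
                  (fun s => - x2 s + (1 - a2 s) * xibar x1 x2 s)).

Definition cost (R : realType) (T : R) (x1 x2 : R -> R) : R :=
  (x1 T ^+ 2 + x2 T ^+ 2) / 2.

Definition optimal (R : realType) (T M c1 c2 : R) (a1 a2 x1 x2 : R -> R) : Prop :=
  admissible T M a1 a2 /\ trajectory T a1 a2 x1 x2 c1 c2 /\
  forall b1 b2 y1 y2 : R -> R, admissible T M b1 b2 ->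
    trajectory T b1 b2 y1 y2 c1 c2 -> cost T x1 x2 <= cost T y1 y2.

(* Main.v *)
Require Import Defs.
From HB Require Import structures.
From mathcomp Require Import all_boot all_order all_algebra.
From mathcomp Require Import all_classical all_reals all_analysis.
From mathcomp Require Import ring lra.
From mathcomp Require Import measurable_realfun.
Import Order.TTheory GRing.Theory Num.Theory.
Import numFieldNormedType.Exports.
Local Open Scope classical_set_scope.
Local Open Scope ring_scope.

Section Core.
Context {R : realType}.

Lemma phi_derive (k K : R) (P : R -> R) (t p : R) : is_derive t 1 P p ->
  is_derive t 1 (fun u => (P u - K) * expR (k * u))
    ((p + k * (P t - K)) * expR (k * t)).
Proof.
move=> dP.
have d1 : is_derive t 1 (fun u => P u - K) p.
  have := is_deriveB dP (is_derive_cst K t 1).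
  by rewrite subr0.
have d2 : is_derive t 1 (fun u => expR (k * u)) (expR (k * t) * k).
  have hk : is_derive t 1 (fun u : R => k * u) k.
    have := is_deriveZ k (is_derive_id t (1:R)).
    by rewrite /GRing.scale /= mulr1.
  exact: (is_derive1_comp (f := expR) (g := fun u : R => k * u)).
have := is_deriveM d1 d2.
suff -> : (P t - K) *: (expR (k * t) * k) + expR (k * t) *: p =
          (p + k * (P t - K)) * expR (k * t) by [].
rewrite /GRing.scale /=; ring.
Qed.


Lemma core_ge (k tau K : R) (P Sf : R -> R) :
  0 < k -> 0 < tau ->
  {within `[0, tau], continuous P} -> P 0 = 0 ->
  (forall t, 0 < t < tau -> is_derive t 1 P (Sf t)) ->
  (forall t, 0 < t < tau -> k * P t + Sf t <= K) ->
  K * expR (- (k * tau)) <= K - k * P tau.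
Proof.
move=> k0 tau0 cP P0 dP hK.
pose Phi u := (P u - K / k) * expR (k * u).
have dPhi t : 0 < t < tau -> is_derive t 1 Phi ((Sf t + k * (P t - K / k)) * expR (k * t)).
  by move=> /dP; exact: phi_derive.
have cPhi : {within `[0, tau], continuous Phi}.
  move=> x.
  apply: (@continuousM _ (subspace `[0, tau]) (fun u => P u - K / k) (fun u => expR (k * u))).
    apply: (@continuousB _ _ (subspace `[0, tau]) P (cst (K / k))); first exact: cP.
    exact: cst_continuous.
  apply: (continuous_subspaceT (f := fun u : R => expR (k * u))).
  move=> y; apply: continuous_comp; last exact: continuous_expR.
  exact: continuousZr.
have mono := ler0_derive1_le_cc _ _ cPhi.
have : Phi tau <= Phi 0.
  apply: mono.
  - move=> x; rewrite in_itv /= => /andP[x0 xt].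
    have hx : 0 < x < tau by rewrite x0 xt.
    have dd := dPhi x hx; exact: ex_derive.
  - move=> x; rewrite in_itv /= => /andP[x0 xt].
    have hx : 0 < x < tau by rewrite x0 xt.
    have dd := dPhi x hx; rewrite derive1E derive_val.
    rewrite pmulr_lle0 ?expR_gt0//.
    have := hK x hx; rewrite mulrBr mulrCA divff ?gt_eqF// mulr1. lra.
  - by rewrite in_itv /= lexx ltW.
  - by rewrite in_itv /= lexx ltW.
  - exact: ltW.
rewrite /Phi mulr0 expR0 mulr1 P0 sub0r.
move=> h.
have ekt : 0 < expR (k * tau) := expR_gt0 _.
have h2 : P tau - K / k <= - (K / k) * expR (- (k * tau)).
  rewrite -ler_pdivlMr // in h. by rewrite expRN.
have h3 : k * P tau - K <= - K * expR (- (k * tau)).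
  have := ler_wpM2l (ltW k0) h2.
  rewrite mulrBr mulrCA divff ?gt_eqF// mulr1 mulrA mulrN mulNr mulrCA divff ?gt_eqF// mulr1.
  by rewrite mulNr.
rewrite mulNr in h3. lra.
Qed.


Lemma core_le (k tau K : R) (P Sf : R -> R) :
  0 < k -> 0 < tau ->
  {within `[0, tau], continuous P} -> P 0 = 0 ->
  (forall t, 0 < t < tau -> is_derive t 1 P (Sf t)) ->
  (forall t, 0 < t < tau -> K <= k * P t + Sf t) ->
  K - k * P tau <= K * expR (- (k * tau)).
Proof.
move=> k0 tau0 cP P0 dP hK.
have cN : {within `[0, tau], continuous (fun u => - P u)}.
  move=> x; apply: (@continuousN _ _ (subspace `[0, tau]) P); exact: cP.
have dN t : 0 < t < tau -> is_derive t 1 (fun u => - P u) (- Sf t).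
  by move=> /dP h; exact: is_deriveN.
have P0' : (fun u => - P u) 0 = 0 by rewrite /= P0 oppr0.
have h := @core_ge k tau (- K) (fun u => - P u) (fun u => - Sf u) k0 tau0 cN P0' dN.
have : - K * expR (- (k * tau)) <= - K - k * - P tau.
  apply: h => t /hK; lra.
lra.
Qed.


Lemma cont_eps (A : set R) (S : R -> R) z : {within A, continuous S} -> A z ->
  forall e, 0 < e -> exists2 d, 0 < d &
    forall u, A u -> `|z - u| < d -> `|S z - S u| < e.
Proof.
move=> cS Az e e0.
have := (proj1 (subspace_continuousP _ _) cS) z Az.
move=> /cvgrPdist_lt /(_ e e0).
rewrite near_withinE => /nbhs_ballP [d d0 H].
exists d => // u Au zu; apply: H => //.
Qed.


Lemma pos_lemma (T : R) (S : R -> R) :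
  0 < T -> {within `[0, T], continuous S} -> 0 < S 0 ->
  (forall tau, 0 < tau <= T -> (forall u, 0 <= u <= tau -> 0 <= S u) -> 0 < S tau) ->
  forall u, 0 <= u <= T -> 0 < S u.
Proof.
move=> T0 cS S0 Hind.
apply: contrapT => /existsNP [u0 /not_implyP [u0T /negP]]; rewrite -leNgt => Su0.
pose A := [set t | 0 <= t <= T /\ S t <= 0].
have An : A !=set0 by exists u0.
have Alb : has_lbound A by exists 0 => t [/andP[]].
have Ainf : has_inf A by split.
set z := inf A.
have zlb : forall a, A a -> z <= a by move=> a Aa; exact: ge_inf.
have z0 : 0 <= z by apply: lb_le_inf => // t [/andP[]].
have zT : z <= T.
  case: An => a Aa; case: (Aa) => /andP[_ aT] _; exact: le_trans (zlb a Aa) aT.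
have zT' : `[0, T]%classic z by rewrite /= in_itv /= z0 zT.
have below u : 0 <= u -> u < z -> 0 < S u.
  move=> u0' uz; rewrite ltNge; apply/negP => Su.
  have : z <= u by apply: zlb; split => //; rewrite u0' /= (le_trans (ltW uz) zT).
  by rewrite leNgt uz.
have Sz0 : 0 <= S z.
  have [->|zpos] := eqVneq z 0; first exact: ltW.
  have zp : 0 < z by rewrite lt_def zpos z0.
  rewrite leNgt; apply/negP => Szn.
  have nS : 0 < - S z by rewrite oppr_gt0.
  have [d d0 Hd] := @cont_eps _ _ _ cS zT' _ nS.
  pose u := Num.max 0 (z - d / 2).
  have uu0 : 0 <= u by rewrite le_max lexx.
  have uz : u < z by rewrite gt_max zp /= ltrBlDr ltrDl divr_gt0.
  have Au : `[0, T]%classic u by rewrite /= in_itv /= uu0 (le_trans (ltW uz) zT).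
  have : `|S z - S u| < - S z.
    apply: Hd => //.
    rewrite ger0_norm ?subr_ge0 ?(ltW uz)//.
    have : z - d / 2 <= u by rewrite le_max lexx orbT.
    have : d / 2 < d by rewrite ltr_pdivrMr // ltr_pMr // ltr1n.
    lra.
  have := below u uu0 uz.
  move=> Su H; rewrite distrC in H; have := ler_norm (S u - S z); lra.
have Szp : 0 < S z.
  have [->|zpos] := eqVneq z 0; first exact: S0.
  have zp : 0 < z by rewrite lt_def zpos z0.
  apply: Hind; first by rewrite zp zT.
  move=> u /andP[uu0 uz]; have [->|uz'] := eqVneq u z; first exact: Sz0.
  by apply/ltW/below => //; rewrite lt_neqAle uz' uz.
have [d d0 Hd] := @cont_eps _ _ _ cS zT' _ Szp.
have [a Aa az] := inf_adherent d0 Ainf.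
case: (Aa) => /andP[a0 aT] Sa.
have : `|S z - S a| < S z.
  apply: Hd; first by rewrite /= in_itv /= a0 aT.
  rewrite distrC ger0_norm ?subr_ge0 ?zlb //.
  rewrite -/z in az; lra.
move=> H; have := ler_norm (S z - S a); lra.
Qed.


Definition good (T : R) (f : R -> R) :=
  measurable_fun `[0, T]%classic f /\
  exists B : R, forall u, 0 <= u <= T -> `|f u| <= B.

Lemma good_int {T t : R} {f : R -> R} : good T f -> 0 <= t <= T ->
  (@lebesgue_measure R).-integrable `[0, t]%classic (EFin \o f).
Proof.
move=> [mf [B HB]] /andP[t0 tT].
apply: measurable_bounded_integrable.
- exact: measurable_itv.
- exact: compact_finite_measure (@segment_compact R 0 t).
- apply: (measurable_funS (E := `[0, T]%classic)) => //.
  by apply: subset_itv; rewrite bnd_simp.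
- exists B; split; first exact: num_real.
  move=> M BM u; rewrite /= in_itv /= => /andP[u0 ut].
  apply: le_trans (ltW BM); apply: HB; rewrite u0 /=; exact: le_trans ut tT.
Qed.

Lemma goodD {T : R} {f g : R -> R} : good T f -> good T g -> good T (fun u => f u + g u).
Proof.
move=> [mf [B1 H1]] [mg [B2 H2]]; split.
  exact: measurable_realfun.measurable_funD.
exists (B1 + B2) => u hu; rewrite (le_trans (ler_normD _ _))// lerD ?H1 ?H2 //.
Qed.

Lemma goodM {T : R} {f g : R -> R} : good T f -> good T g -> good T (fun u => f u * g u).
Proof.
move=> [mf [B1 H1]] [mg [B2 H2]]; split.
  exact: measurable_realfun.measurable_funM.
exists (B1 * B2) => u hu; rewrite normrM ler_pM ?H1 ?H2 //.
Qed.

Lemma goodC T (r : R) : good T (fun _ => r).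
Proof. split; first exact: measurable_cst. by exists `|r|. Qed.

Lemma goodN {T : R} {f : R -> R} : good T f -> good T (fun u => - f u).
Proof.
move=> gf; have := goodM (goodC T (-1)) gf.
suff -> : (fun u => - f u) = (fun u => -1 * f u) by [].
by apply: funext => u; rewrite mulN1r.
Qed.

Lemma good_cont {T : R} {f : R -> R} : 0 <= T -> {within `[0, T], continuous f} -> good T f.
Proof.
move=> T0 cf; split.
  apply: measurable_realfun.subspace_continuous_measurable_fun => //; exact: measurable_itv.
have := compact_bounded (continuous_compact cf (@segment_compact R 0 T)).
move=> [B [_ HB]]; exists (B + 1) => u hu.
apply: (HB (B + 1)); first by rewrite ltrDl.
by exists u => //; rewrite /= in_itv /= hu.
Qed.

End Core.

Section Traj.
Context {R : realType}.
Variables (T M c : R) (a1 a2 x1 x2 : R -> R).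
Hypothesis T0 : 0 < T.
Hypothesis adm : admissible T M a1 a2.
Hypothesis tr : trajectory T a1 a2 x1 x2 c c.

Let S u := x1 u + x2 u.
Let s u := a1 u + a2 u.

Lemma cS : {within `[0, T], continuous S}.
Proof.
case: tr => c1 [c2 _] x.
apply: (@continuousD _ _ (subspace `[0, T]) x1 x2); [exact: c1|exact: c2].
Qed.

Lemma ga1 : good T a1.
Proof.
case: adm => m1 [m2 H]; split => //; exists 1 => u /H [/andP[u0 u1] _ _].
by rewrite ger0_norm.
Qed.

Lemma ga2 : good T a2.
Proof.
case: adm => m1 [m2 H]; split => //; exists 1 => u /H [_ /andP[u0 u1] _].
by rewrite ger0_norm.
Qed.

Lemma gx1 : good T x1.
Proof. case: tr => c1 _; exact: good_cont (ltW T0) c1. Qed.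
Lemma gx2 : good T x2.
Proof. case: tr => _ [c2 _]; exact: good_cont (ltW T0) c2. Qed.

Lemma gS : good T S.
Proof. exact: goodD gx1 gx2. Qed.
Lemma gs : good T s.
Proof. exact: goodD ga1 ga2. Qed.

Lemma s_bnd u : 0 <= u <= T -> 0 <= s u <= M.
Proof.
case: adm => _ [_ H] /H [/andP[h1 _] /andP[h2 _] h3].
by rewrite /s h3 addr_ge0.
Qed.

Lemma sum_eq t : 0 <= t <= T ->
  S t = 2 * c - 2^-1 * \int[lebesgue_measure]_(u in `[0, t]) (s u * S u).
Proof.
move=> ht.
case: tr => _ [_ [e1 e2]].
have g1 : good T (fun u => - x1 u + (1 - a1 u) * xibar x1 x2 u).
  apply: goodD; first exact: goodN gx1.
  apply: goodM; first exact: goodD (goodC _ _) (goodN ga1).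
  exact: (goodM gS (goodC T 2^-1)).
have g2 : good T (fun u => - x2 u + (1 - a2 u) * xibar x1 x2 u).
  apply: goodD; first exact: goodN gx2.
  apply: goodM; first exact: goodD (goodC _ _) (goodN ga2).
  exact: (goodM gS (goodC T 2^-1)).
rewrite /S (e1 t ht) (e2 t ht) addrACA -(@RintegralD _ _ _ lebesgue_measure _ _ _ _ (good_int g1 ht) (good_int g2 ht)); last exact: measurable_itv.
rewrite -mulNr -(@RintegralZl _ _ _ lebesgue_measure _ _ _ _ (good_int (goodM gs gS) ht)); last exact: measurable_itv.
rewrite -mulr2n mulr_natl; congr (_ + _).
by apply: eq_Rintegral => u _; rewrite /xibar /s /S; field.
Qed.

Lemma hTT : 0 <= T <= T.
Proof. by rewrite lexx andbT ltW. Qed.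

Let P t := \int[lebesgue_measure]_(u in `[0, t]) S u.
Let h u := (M - s u) * S u.

Lemma gh : good T h.
Proof. exact: goodM (goodD (goodC _ _) (goodN gs)) gS. Qed.

Lemma G_eq t : 0 <= t <= T ->
  M / 2 * P t + S t = 2 * c + 2^-1 * \int[lebesgue_measure]_(u in `[0, t]) h u.
Proof.
move=> ht; rewrite (sum_eq t ht) /P /h.
have -> : \int[lebesgue_measure]_(u in `[0, t]) ((M - s u) * S u) =
          \int[lebesgue_measure]_(u in `[0, t]) (M * S u - s u * S u).
  by apply: eq_Rintegral => u _; ring.
rewrite (@RintegralB _ _ _ lebesgue_measure _ _ _ _ (good_int (goodM (goodC _ M) gS) ht) (good_int (goodM gs gS) ht)); last exact: measurable_itv.
rewrite (@RintegralZl _ _ _ lebesgue_measure _ _ _ _ (good_int gS ht)); last exact: measurable_itv.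
ring.
Qed.

Lemma P0 : P 0 = 0.
Proof. by rewrite /P set_itv1 Rintegral_set1. Qed.

Lemma S0 : S 0 = 2 * c.
Proof.
have h0 : (0:R) <= 0 <= T by rewrite lexx ltW.
by rewrite (sum_eq 0 h0) set_itv1 Rintegral_set1 mulr0 subr0.
Qed.

Lemma cP tau : 0 <= tau <= T -> {within `[0, tau], continuous P}.
Proof.
move=> /andP[t0 tT].
apply: (continuous_subspaceW (B := `[0, T]%classic)).
  by apply: subset_itv; rewrite bnd_simp.
have := (parameterized_integral_continuous (ltW T0) (good_int gS hTT)).
by rewrite /parameterized_integral /P.
Qed.

Lemma dP t : 0 < t < T -> is_derive t 1 P (S t).
Proof.
move=> /andP[t0 tT].
have cSt : {for t, continuous S}.
  case: (proj1 (continuous_within_itvP _ T0) cS) => + _ _.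
  by apply; rewrite in_itv /= t0 tT.
have [d1 d2] := continuous_FTC1_closed tT (good_int gS hTT) t0 cSt.
apply: DeriveDef => //; by rewrite -derive1E.
Qed.

Lemma h_ge0 u : 0 <= u <= T -> 0 <= S u -> 0 <= h u.
Proof.
move=> hu Su; rewrite /h mulr_ge0 // subr_ge0; by case/andP: (s_bnd u hu).
Qed.

Lemma J_mono t tau : 0 <= t -> t <= tau -> tau <= T ->
  (forall u, 0 <= u <= tau -> 0 <= S u) ->
  \int[lebesgue_measure]_(u in `[0, t]) h u <= \int[lebesgue_measure]_(u in `[0, tau]) h u.
Proof.
move=> t0 ttau tauT Spos.
have htau : 0 <= tau <= T by rewrite (le_trans t0 ttau) tauT.
rewrite -subr_ge0.
rewrite (@Rintegral_itvB _ h (BLeft 0) (BRight tau) t (good_int gh htau)); last 2 first.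
- by rewrite bnd_simp.
- by rewrite bnd_simp.
apply: Rintegral_ge0 => u; rewrite /= in_itv /= => /andP[tu utau].
have hu : 0 <= u <= tau by rewrite utau (le_trans t0 (ltW tu)).
apply: h_ge0; last exact: Spos.
by case/andP: hu => -> /le_trans; apply.
Qed.

Hypothesis M0 : 0 < M.
Hypothesis c0 : 0 < c.

Let J t := \int[lebesgue_measure]_(u in `[0, t]) h u.

Lemma key tau : 0 < tau <= T -> (forall u, 0 <= u <= tau -> 0 <= S u) ->
  (2 * c + 2^-1 * J tau) * expR (- (M / 2 * tau)) <= S tau.
Proof.
move=> /andP[tau0 tauT] Spos.
have htau : 0 <= tau <= T by rewrite ltW.
have k0 : 0 < M / 2 by rewrite divr_gt0.
have := @core_ge _ (M / 2) tau (M / 2 * P tau + S tau) P S k0 tau0 (cP tau htau) P0.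
rewrite (G_eq tau htau) -/(J tau).
have hd : forall t, 0 < t < tau -> is_derive t 1 P (S t).
  move=> t /andP[t0 tt]; apply: dP; rewrite t0 /=; exact: lt_le_trans tt tauT.
move=> /(_ hd) H.
have : M / 2 * P tau + S tau - M / 2 * P tau = S tau by ring.
rewrite (G_eq tau htau) -/(J tau) => <-.
apply: H => t /andP[t0 tt].
have ht : 0 <= t <= T by rewrite ltW //= (le_trans (ltW tt) tauT).
rewrite (G_eq t ht) lerD2l ler_pM2l ?invr_gt0 //.
exact: (J_mono t tau) (ltW t0) (ltW tt) tauT Spos.
Qed.

Lemma J_ge0 t : (forall u, 0 <= u <= t -> 0 <= S u) -> t <= T -> 0 <= J t.
Proof.
move=> Spos tT; apply: Rintegral_ge0 => u; rewrite /= in_itv /= => /andP[u0 ut].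
apply: h_ge0; first by rewrite u0 (le_trans ut tT).
by apply: Spos; rewrite u0 ut.
Qed.

Lemma S_pos u : 0 <= u <= T -> 0 < S u.
Proof.
move: u; apply: (@pos_lemma _ T S T0 cS); first by rewrite S0 mulr_gt0.
move=> tau /andP[tau0 tauT] Spos.
apply: lt_le_trans (key _ _ _) => //; last by rewrite tau0.
apply: mulr_gt0; last exact: expR_gt0.
have : 0 <= 2^-1 * J tau by rewrite mulr_ge0 ?invr_ge0 // J_ge0.
have : 0 < 2 * c by rewrite mulr_gt0.
move: (2 * c) (2^-1 * J tau) => x y; lra.
Qed.

Lemma S_lower : (2 * c + 2^-1 * J T) * expR (- (M / 2 * T)) <= S T.
Proof.
apply: key; first by rewrite T0 lexx.
by move=> u hu; apply/ltW/S_pos.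
Qed.

Lemma JT_ge0 : 0 <= J T.
Proof. by apply: J_ge0 => // u hu; apply/ltW/S_pos. Qed.

Lemma S_exact : (forall t, 0 <= t <= T -> J t = 0) ->
  S T = 2 * c * expR (- (M / 2 * T)).
Proof.
move=> J0.
have k0 : 0 < M / 2 by rewrite divr_gt0.
have hd : forall t, 0 < t < T -> is_derive t 1 P (S t) by exact: dP.
have GE t : 0 < t < T -> M / 2 * P t + S t = 2 * c.
  move=> /andP[t0 tT]; have ht : 0 <= t <= T by rewrite !ltW.
  by rewrite (G_eq t ht) -/(J t) (J0 t ht) mulr0 addr0.
have ST : 2 * c - M / 2 * P T = S T.
  have := G_eq T hTT; rewrite -/(J T) (J0 T hTT) mulr0 addr0 => <-; ring.
apply/eqP; rewrite eq_le; apply/andP; split.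
- rewrite -ST; apply: (@core_le _ (M / 2) T (2 * c) P S k0 T0 (cP T hTT) P0 hd).
  by move=> t /GE ->.
- rewrite -ST; apply: (@core_ge _ (M / 2) T (2 * c) P S k0 T0 (cP T hTT) P0 hd).
  by move=> t /GE ->.
Qed.

Lemma mh t : 0 <= t <= T -> measurable_fun `[0, t]%classic (EFin \o h).
Proof.
move=> /andP[t0 tT]; apply/measurable_realfun.measurable_EFinP.
apply: (measurable_funS (E := `[0, T]%classic)) => //; last exact: gh.1.
by apply: subset_itv; rewrite bnd_simp.
Qed.

Lemma J0_of_ae : {ae lebesgue_measure, forall t, 0 <= t <= T -> a1 t + a2 t = M} ->
  forall t, 0 <= t <= T -> J t = 0.
Proof.
move=> Hae t ht.
have E : (\int[lebesgue_measure]_(u in `[0%R, t]) (EFin \o h) u =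
          \int[lebesgue_measure]_(u in `[0%R, t]) (cst 0 u))%E.
  apply: (ae_eq_integral (cst 0)).
  - exact: measurable_itv.
  - exact: mh.
  - exact: measurable_cst.
  apply: (@filterS _ _ (ae_filter_ringOfSetsType _) _ _ _ Hae) => u Hu.
  rewrite /= in_itv /= => /andP[u0 ut].
  have hu : 0 <= u <= T by rewrite u0 (le_trans ut) //; case/andP: ht.
  by rewrite /h /s Hu // subrr mul0r.
by rewrite /J /Rintegral E integral0.
Qed.

Lemma ae_of_J0 : J T = 0 ->
  {ae lebesgue_measure, forall t, 0 <= t <= T -> a1 t + a2 t = M}.
Proof.
move=> JT.
have fin : (\int[lebesgue_measure]_(u in `[0%R, T]) (EFin \o h) u)%E \is a fin_num.
  apply: (integrable_fin_num _ (good_int gh hTT)); exact: measurable_itv.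
have I0 : (\int[lebesgue_measure]_(u in `[0%R, T]) (EFin \o h) u = 0)%E.
  by rewrite -(fineK fin); move: JT; rewrite /J /Rintegral => ->.
have Iabs : (\int[lebesgue_measure]_(u in `[0%R, T]) `|(EFin \o h) u| = 0)%E.
  rewrite -I0; apply: eq_integral => u; rewrite inE /= in_itv /= => hu.
  by rewrite ger0_norm // h_ge0 //; apply/ltW/S_pos.
have mI : measurable (`[0%R, T]%classic : set (measurableTypeR R)).
  exact: measurable_itv.
have := proj1 (ae_eq_integral_abs lebesgue_measure mI (mh T hTT)) Iabs.
move=> Hae.
apply: (@filterS _ _ (ae_filter_ringOfSetsType _) _ _ _ Hae) => u Hu hu.
have : h u = 0.
  have := Hu; rewrite /= in_itv /= => /(_ hu) [->] //.
rewrite /h => /eqP; rewrite mulf_eq0 => /orP[|].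
  by rewrite subr_eq0 => /eqP ->.
by move/eqP => S0'; have := S_pos u hu; rewrite S0' ltxx.
Qed.

Lemma traj_facts :
  [/\ 2 * c * expR (- (M / 2 * T)) <= x1 T + x2 T,
   (x1 T + x2 T <= 2 * c * expR (- (M / 2 * T)) ->
      {ae lebesgue_measure, forall t, 0 <= t <= T -> a1 t + a2 t = M}) &
   ({ae lebesgue_measure, forall t, 0 <= t <= T -> a1 t + a2 t = M} ->
      x1 T + x2 T = 2 * c * expR (- (M / 2 * T)))].
Proof.
have _ := (T0, adm, tr, M0, c0).
have low := S_lower.
have J0 := JT_ge0.
have eP : 0 < expR (- (M / 2 * T)) := expR_gt0 _.
split.
- apply: le_trans low; rewrite ler_pM2r // lerDl mulr_ge0 // invr_ge0 //.
- move=> up; apply: ae_of_J0.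
  have := le_trans low up; rewrite ler_pM2r // gerDl => H.
  apply/eqP; rewrite eq_le J0 andbT.
  by rewrite pmulr_rle0 ?invr_gt0 // in H.
- move=> Hae; exact: S_exact (J0_of_ae Hae).
Qed.

End Traj.


Section Comp.
Context {R : realType}.
Variables (T M c : R).
Hypothesis T0 : 0 < T.
Hypothesis M0 : 0 < M.
Hypothesis M2 : M <= 2.

Let k := - (M / 2).
Let Y u := c * expR (k * u).

Lemma Y_derive (t : R) : is_derive t 1 Y (k * Y t).
Proof.
have := @phi_derive R k (- c) (cst 0) t 0 (is_derive_cst (0:R) t (1:R)).
rewrite /cst sub0r opprK add0r -mulrA => H; exact: H.
Qed.

Lemma Y_cont : continuous Y.
Proof.
move=> x; apply: (@continuousM _ R (cst c) (fun u => expR (k * u))).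
  exact: cst_continuous.
apply: continuous_comp; last exact: continuous_expR.
exact: continuousZr.
Qed.

Lemma Y_adm : admissible T M (fun _ => M / 2) (fun _ => M / 2).
Proof.
split; first exact: measurable_cst.
split; first exact: measurable_cst.
have h1 : 0 <= M / 2 by rewrite divr_ge0 // ltW.
have h2 : M / 2 <= 1 by rewrite ler_pdivrMr // mul1r.
move=> t _; split.
- by rewrite h1 h2.
- by rewrite h1 h2.
- by rewrite -splitr.
Qed.

Lemma Y_traj : trajectory T (fun _ => M / 2) (fun _ => M / 2) Y Y c c.
Proof.
have eq t : 0 <= t <= T -> Y t = c + \int[lebesgue_measure]_(s in `[0, t])
                  (- Y s + (1 - M / 2) * xibar Y Y s).
  move=> /andP[t0 tT].
  rewrite (@eq_Rintegral _ _ _ lebesgue_measure _ (fun s => k * Y s)); last first.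
    by move=> u _; rewrite /xibar /k; field.
  have [<-|tp] := eqVneq 0 t.
    by rewrite set_itv1 Rintegral_set1 addr0 /Y mulr0 expR0 mulr1.
  have t0' : 0 < t by rewrite lt_def eq_sym tp t0.
  rewrite /Rintegral (@continuous_FTC2 _ (fun s => k * Y s) Y 0 t t0') /=.
  - by rewrite /Y mulr0 expR0 mulr1; ring.
  - apply: continuous_subspaceT => x.
    apply: (@continuousM _ R (cst k) Y); [exact: cst_continuous|exact: Y_cont].
  - split.
    + move=> x _; have dd := Y_derive x; exact: ex_derive.
    + exact/cvg_at_right_filter/Y_cont.
    + exact/cvg_at_left_filter/Y_cont.
  - move=> x _; have := Y_derive x => dd; by rewrite derive1E derive_val.
split; first exact: continuous_subspaceT Y_cont.
split; first exact: continuous_subspaceT Y_cont.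
by split.
Qed.

End Comp.

Theorem proposition5 (R : realType) (T M c : R) (a1 a2 x1 x2 : R -> R) :
  0 < T -> 0 < M <= 2 -> 0 < c ->
  admissible T M a1 a2 -> trajectory T a1 a2 x1 x2 c c ->
  (optimal T M c c a1 a2 x1 x2 <->
   ({ae (@lebesgue_measure R), forall t, 0 <= t <= T -> a1 t + a2 t = M}
    /\ x1 T = x2 T)).
Proof.
move=> T0 /andP[M0 M2] c0 adm tr.
have [low up ex] := traj_facts _ _ _ _ _ _ _ T0 adm tr M0 c0.
have E0 : 0 < expR (- (M / 2 * T)) := expR_gt0 _.
move: low up ex E0; set E := expR (- (M / 2 * T)) => low up ex E0.
have cE : 0 < c * E by rewrite mulr_gt0.
have costE : forall y1 y2 : R -> R, cost T y1 y2 =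
   ((y1 T + y2 T) / 2) ^+ 2 + ((y1 T - y2 T) / 2) ^+ 2.
  by move=> y1 y2; rewrite /cost; field.
have lowc : forall b1 b2 y1 y2 : R -> R, admissible T M b1 b2 ->
    trajectory T b1 b2 y1 y2 c c -> (c * E) ^+ 2 <= cost T y1 y2.
  move=> b1 b2 y1 y2 ab tb.
  have [lowy _ _] := traj_facts _ _ _ _ _ _ _ T0 ab tb M0 c0.
  rewrite -/E in lowy.
  rewrite costE.
  have h1 : c * E <= (y1 T + y2 T) / 2.
    by rewrite ler_pdivlMr // mulrC mulrA.
  have h2 : (c * E) ^+ 2 <= ((y1 T + y2 T) / 2) ^+ 2.
    by rewrite ler_sqr ?nnegrE ?(ltW cE) // (le_trans (ltW cE) h1).
  by rewrite (le_trans h2) // lerDl sqr_ge0.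
split.
- move=> [_ [_ opt]].
  have := opt _ _ _ _ (Y_adm T M M0 M2) (Y_traj T M c).
  have YT : c * expR (- (M / 2) * T) = c * E by rewrite /E mulNr.
  rewrite costE /cost YT.
  have e : ((c * E) ^+ 2 + (c * E) ^+ 2) / 2 = (c * E) ^+ 2 by field.
  rewrite e => H.
  have h1 : c * E <= (x1 T + x2 T) / 2.
    by rewrite ler_pdivlMr // mulrC mulrA.
  have h2 : (c * E) ^+ 2 <= ((x1 T + x2 T) / 2) ^+ 2.
    by rewrite ler_sqr ?nnegrE ?(ltW cE) // (le_trans (ltW cE) h1).
  have HH : ((x1 T + x2 T) / 2) ^+ 2 + ((x1 T - x2 T) / 2) ^+ 2 <= (c * E) ^+ 2.
    exact: H.
  have D0 : ((x1 T - x2 T) / 2) ^+ 2 = 0.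
    apply/eqP; rewrite eq_le sqr_ge0 andbT.
    by rewrite -(lerD2l (((x1 T + x2 T) / 2) ^+ 2)) addr0 (le_trans HH h2).
  have S0 : ((x1 T + x2 T) / 2) ^+ 2 <= (c * E) ^+ 2.
    by rewrite -[X in X <= _]addr0 -D0.
  split.
  + apply: up.
    rewrite ler_sqr ?nnegrE ?(ltW cE) // ?(le_trans (ltW cE) h1) // in S0.
    have -> : 2 * c * E = c * E * 2 by ring.
    by rewrite -ler_pdivrMr.
  + move: D0 => /eqP; rewrite sqrf_eq0 mulf_eq0 invr_eq0 pnatr_eq0 orbF subr_eq0.
    by move/eqP.
- move=> [Hae x12].
  split => //; split => //.
  move=> b1 b2 y1 y2 ab tb.
  apply: le_trans (lowc _ _ _ _ ab tb).
  rewrite costE -x12 subrr mul0r expr0n /= addr0.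
  have := ex Hae; rewrite -x12 => ->.
  by rewrite le_eqVlt; apply/orP; left; apply/eqP; field.
Qed.
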